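(* Let $$c=s^8-(2-2i)s^7-(6+2i)s^6+(10+2i)s^5+4is^4+(10-2i)s^3+(6-2i)s^2-(2+2i)s-1,$$ $$d=s^6-(3+3i)s^5+3is^4+(4-4i)s^3+3s^2+(3+3i)s+i,$$ and $$y=-\frac{(1+i)(s^2-1)(s^2+2is+1)(s^2-2is+1)^2\,c}{4s(s^2+i)(s^2-i)^2(s^2+(1+i)s-i)\,d},\qquad t=\frac{(s^2-1)^2(s^4+6s^2+1)^3}{32s^2(s^4+1)^3}.$$ Then $y(t)$ is a solution of $\mathrm{P}_{\mathrm{VI}}$ with parameters $(\theta_1,\theta_2,\theta_3,\theta_4)=(1/2,1/2,1/2,3/4)$.
   Context: $\mathrm{P}_{\mathrm{VI}}$ is the equation $$\frac{d^2y}{dt^2}=\frac12\Big(\frac1y+\frac1{y-1}+\frac1{y-t}\Big)\Big(\frac{dy}{dt}\Big)^2-\Big(\frac1t+\frac1{t-1}+\frac1{y-t}\Big)\frac{dy}{dt}+\frac{y(y-1)(y-t)}{t^2(t-1)^2}\Big(\alpha+\beta\frac{t}{y^2}+\gamma\frac{t-1}{(y-1)^2}+\delta\frac{t(t-1)}{(y-t)^2}\Big),$$ with $\alpha=(\theta_4-1)^2/2$, $\beta=-\theta_1^2/2$, $\gamma=\theta_3^2/2$, $\delta=(1-\theta_2^2)/2$. When $y,t$ are given as rational functions of a parameter on a curve, derivatives with respect to $t$ are computed via the chain rule. Here $i=\sqrt{-1}$. *)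

(* Defs.v *)
From Stdlib Require Import Reals.
From Coquelicot Require Import Coquelicot.
Open Scope C_scope.

Fixpoint cpow (z : C) (n : nat) : C :=
  match n with O => RtoC 1 | S m => z * cpow z m end.
Notation "z ^^ n" := (cpow z n) (at level 30, right associativity) : C_scope.

Definition cR (r : R) : C := RtoC r.

Definition cP (s : C) : C :=
  s^^8 - (cR 2 - cR 2 * Ci) * s^^7 - (cR 6 + cR 2 * Ci) * s^^6
  + (cR 10 + cR 2 * Ci) * s^^5 + cR 4 * Ci * s^^4 + (cR 10 - cR 2 * Ci) * s^^3
  + (cR 6 - cR 2 * Ci) * s^^2 - (cR 2 + cR 2 * Ci) * s - cR 1.

Definition dP (s : C) : C :=
  s^^6 - (cR 3 + cR 3 * Ci) * s^^5 + cR 3 * Ci * s^^4 + (cR 4 - cR 4 * Ci) * s^^3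
  + cR 3 * s^^2 + (cR 3 + cR 3 * Ci) * s + Ci.

Definition ynum (s : C) : C :=
  - ((cR 1 + Ci) * (s^^2 - cR 1) * (s^^2 + cR 2 * Ci * s + cR 1)
     * (s^^2 - cR 2 * Ci * s + cR 1)^^2 * cP s).
Definition yden (s : C) : C :=
  cR 4 * s * (s^^2 + Ci) * (s^^2 - Ci)^^2 * (s^^2 + (cR 1 + Ci) * s - Ci) * dP s.
Definition yfun (s : C) : C := ynum s / yden s.

Definition tnum (s : C) : C := (s^^2 - cR 1)^^2 * (s^^4 + cR 6 * s^^2 + cR 1)^^3.
Definition tden (s : C) : C := cR 32 * s^^2 * (s^^4 + cR 1)^^3.
Definition tfun (s : C) : C := tnum s / tden s.

Definition PVI_alpha (th4 : C) : C := (th4 - cR 1)^^2 / cR 2.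
Definition PVI_beta  (th1 : C) : C := - (th1^^2 / cR 2).
Definition PVI_gamma (th3 : C) : C := th3^^2 / cR 2.
Definition PVI_delta (th2 : C) : C := (cR 1 - th2^^2) / cR 2.

(* the PVI equation at a point: y, its first and second t-derivatives y1, y2, and t *)
Definition PVI_eq (th1 th2 th3 th4 : C) (t y y1 y2 : C) : Prop :=
  y2 = cR (1/2) * (/ y + / (y - cR 1) + / (y - t)) * y1^^2
       - (/ t + / (t - cR 1) + / (y - t)) * y1
       + y * (y - cR 1) * (y - t) / (t^^2 * (t - cR 1)^^2)
         * (PVI_alpha th4 + PVI_beta th1 * t / y^^2
            + PVI_gamma th3 * (t - cR 1) / (y - cR 1)^^2
            + PVI_delta th2 * t * (t - cR 1) / (y - t)^^2).

(* Main.v *)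
Require Import Defs.
From Stdlib Require Import Reals ZArith List Lra.
From Coquelicot Require Import Coquelicot.
Import ListNotations.
Open Scope C_scope.

Definition gz := (Z * Z)%type.
Definition toC (x : gz) : C := (IZR (fst x), IZR (snd x)).
Definition gadd (x y : gz) : gz := ((fst x + fst y)%Z, (snd x + snd y)%Z).
Definition gmul (x y : gz) : gz :=
  ((fst x * fst y - snd x * snd y)%Z, (fst x * snd y + snd x * fst y)%Z).
Definition gopp (x : gz) : gz := ((- fst x)%Z, (- snd x)%Z).

Lemma toC_add x y : toC (gadd x y) = toC x + toC y.
Proof. destruct x, y; unfold toC, gadd; simpl. rewrite !plus_IZR. reflexivity. Qed.
Lemma toC_mul x y : toC (gmul x y) = toC x * toC y.
Proof. destruct x, y; unfold toC, gmul, Cmult; simpl.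
  rewrite minus_IZR, plus_IZR, !mult_IZR. reflexivity. Qed.
Lemma toC_opp x : toC (gopp x) = - toC x.
Proof. destruct x; unfold toC, gopp, Copp; simpl. rewrite !opp_IZR. reflexivity. Qed.
Lemma toC_0 : toC (0%Z,0%Z) = 0.
Proof. reflexivity. Qed.
Lemma toC_real a : toC (a,0%Z) = RtoC (IZR a).
Proof. reflexivity. Qed.

Fixpoint addP (p q : list gz) : list gz :=
  match p with
  | [] => q
  | c :: p' => match q with [] => p | e :: q' => gadd c e :: addP p' q' end
  end.
Definition scalP (c : gz) (q : list gz) := map (gmul c) q.
Fixpoint mulP (p q : list gz) : list gz :=
  match p with [] => [] | c :: p' => addP (scalP c q) ((0%Z,0%Z) :: mulP p' q) end.
Definition oppP (p : list gz) := map gopp p.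
Definition subP p q := addP p (oppP q).
Fixpoint derivP (p : list gz) : list gz :=
  match p with [] => [] | c :: p' => addP p' ((0%Z,0%Z) :: derivP p') end.
Fixpoint powP (p : list gz) (n : nat) : list gz :=
  match n with O => [(1%Z,0%Z)] | S m => mulP p (powP p m) end.
Definition Xp : list gz := [(0%Z,0%Z); (1%Z,0%Z)].
Definition cst (a b : Z) : list gz := [(a,b)].
Definition iszeroP (p : list gz) : bool :=
  forallb (fun c => andb (Z.eqb (fst c) 0) (Z.eqb (snd c) 0)) p.

Fixpoint evalP (p : list gz) (z : C) : C :=
  match p with [] => 0 | c :: p' => toC c + z * evalP p' z end.

Lemma evalP_add p q z : evalP (addP p q) z = evalP p z + evalP q z.
Proof. revert q; induction p as [|c p IH]; intros q; simpl. ring.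
  destruct q as [|e q]; simpl. ring. rewrite toC_add, IH. ring. Qed.
Lemma evalP_scal c q z : evalP (scalP c q) z = toC c * evalP q z.
Proof. unfold scalP. induction q as [|e q IH]; simpl. ring. rewrite toC_mul, IH. ring. Qed.
Lemma evalP_mul p q z : evalP (mulP p q) z = evalP p z * evalP q z.
Proof. induction p as [|c p IH]; simpl. ring.
  rewrite evalP_add, evalP_scal. simpl. rewrite IH, toC_0. ring. Qed.
Lemma evalP_opp p z : evalP (oppP p) z = - evalP p z.
Proof. unfold oppP. induction p as [|c p IH]; simpl. ring. rewrite toC_opp, IH. ring. Qed.
Lemma evalP_sub p q z : evalP (subP p q) z = evalP p z - evalP q z.
Proof. unfold subP. rewrite evalP_add, evalP_opp. ring. Qed.
Lemma evalP_pow p n z : evalP (powP p n) z = cpow (evalP p z) n.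
Proof. induction n as [|n IH]; simpl. rewrite toC_real. ring. rewrite evalP_mul, IH. reflexivity. Qed.
Lemma evalP_X z : evalP Xp z = z.
Proof. unfold Xp; simpl. rewrite toC_0, toC_real. ring. Qed.
Lemma evalP_cst a b z : evalP (cst a b) z = toC (a,b).
Proof. unfold cst; simpl. ring. Qed.
Lemma evalP_zero p z : iszeroP p = true -> evalP p z = 0.
Proof. induction p as [|[a b] p IH]; simpl. auto.
  intros H. apply andb_prop in H as [H1 H2]. apply andb_prop in H1 as [Ha Hb].
  apply Z.eqb_eq in Ha, Hb. subst. rewrite IH by auto. rewrite toC_0. ring. Qed.

Lemma is_derive_eqv (f : C -> C) z l l' :
  @is_derive C_AbsRing (AbsRing_NormedModule C_AbsRing) f z l -> l = l' ->
  @is_derive C_AbsRing (AbsRing_NormedModule C_AbsRing) f z l'.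
Proof. intros H ->; exact H. Qed.

Lemma aux_eq (e d z : C) : (1 * e + z * d) = e + (0 + z*d). Proof. ring. Qed.

Lemma evalP_deriv0 p z :
  @is_derive C_AbsRing (AbsRing_NormedModule C_AbsRing) (evalP p) z (evalP (derivP p) z).
Proof.
  induction p as [|c p IH].
  - exact (is_derive_const (K:=C_AbsRing) (V:=AbsRing_NormedModule C_AbsRing) (0:C) z).
  - pose proof (is_derive_mult (K:=C_AbsRing) (fun u => u) (evalP p) z _ _ (is_derive_id (K:=C_AbsRing) z) IH Cmult_comm) as H1.
    pose proof (is_derive_plus (K:=C_AbsRing) (V:=AbsRing_NormedModule C_AbsRing) (fun _ => toC c) _ z _ _ (is_derive_const (K:=C_AbsRing) (V:=AbsRing_NormedModule C_AbsRing) (toC c) z) H1) as H2.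
    apply (is_derive_ext (K:=C_AbsRing) (V:=AbsRing_NormedModule C_AbsRing) _ (evalP (c :: p))) in H2; [| intros; reflexivity].
    eapply is_derive_eqv. exact H2.
    simpl derivP. rewrite evalP_add. simpl. rewrite toC_0.
        change (@plus C_AbsRing) with Cplus. change (@mult C_AbsRing) with Cmult.
        change (@zero C_AbsRing) with (RtoC 0). change (@one C_AbsRing) with (RtoC 1).
        rewrite plus_zero_l. exact (aux_eq _ _ _).
Qed.

Lemma convD (f: C -> C) z l : @is_derive C_AbsRing (AbsRing_NormedModule C_AbsRing) f z l -> @is_derive C_AbsRing C_NormedModule f z l.
Proof. unfold is_derive, filterdiff. intros [H1 H3]. split. destruct H1 as [a b c]. constructor.
intros; apply a. intros; apply b. destruct c as [M [HM HM2]]. exists M; split; auto.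
intros x Hx. specialize (H3 x Hx). unfold is_domin in *. intros eps. specialize (H3 eps).
exact H3. Qed.
Lemma convA (f: C -> C) z l : @is_derive C_AbsRing C_NormedModule f z l -> @is_derive C_AbsRing (AbsRing_NormedModule C_AbsRing) f z l.
Proof. unfold is_derive, filterdiff. intros [H1 H3]. split. destruct H1 as [a b c]. constructor.
intros; apply a. intros; apply b. destruct c as [M [HM HM2]]. exists M; split; auto.
intros x Hx. specialize (H3 x Hx). unfold is_domin in *. intros eps. specialize (H3 eps).
exact H3. Qed.
Lemma evalP_deriv p z :
  @is_derive C_AbsRing C_NormedModule (evalP p) z (evalP (derivP p) z).
Proof. apply convD, evalP_deriv0. Qed.
Definition Gf (n d p q a b a1 b1 b0 : C) : C :=
  RtoC 64  *  (a1 * b  -  a * b1)  *  (q * q * q)  *  n  *  (n - d)  *  (n * q - p * d)  *  (p * p)  *  ((p - q) * (p - q))  *  (d * d * d)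
   -  RtoC 32  *  (a * a)  *  ((n - d) * (n * q - p * d)  +  n * (n * q - p * d)  +  q * n * (n - d))  *  b0  *  (p * p)  *  ((p - q) * (p - q))  *  (d * d * d * d)  *  q
   +  RtoC 64  *  a  *  ((p - q) * (n * q - p * d)  +  p * (n * q - p * d)  +  d * p * (p - q))  *  b  *  b0  *  n  *  (n - d)  *  p  *  (p - q)  *  (d * d * d)  *  (q * q)
   -  (b * b)  *  b0  *  (q * q * q)  *  (RtoC 2  *  q  *  (n * n)  *  ((n - d) * (n - d))  *  ((n * q - p * d) * (n * q - p * d))
         -  RtoC 8  *  p  *  (d * d)  *  ((n - d) * (n - d))  *  ((n * q - p * d) * (n * q - p * d))
         +  RtoC 8  *  (p - q)  *  (d * d)  *  (n * n)  *  ((n * q - p * d) * (n * q - p * d))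
         +  RtoC 24  *  q  *  p  *  (p - q)  *  (d * d)  *  (n * n)  *  ((n - d) * (n - d))).

Lemma half : cR (1/2) = / RtoC 2.
Proof. unfold cR. rewrite RtoC_div by lra. field. Qed.
Lemma tq : cR (3/4) = RtoC 3 / RtoC 4.
Proof. unfold cR. rewrite RtoC_div by lra. reflexivity. Qed.

Lemma Csub0 (x y : C) : x - y = 0 -> x = y.
Proof. intros H. replace x with ((x - y) + y) by ring. rewrite H. ring. Qed.

Lemma key (n d p q a b a1 b1 b0 : C) :
  n <> 0 -> d <> 0 -> p <> 0 -> q <> 0 -> b <> 0 -> b0 <> 0 ->
  n - d <> 0 -> p - q <> 0 -> n*q - p*d <> 0 ->
  Gf n d p q a b a1 b1 b0 = 0 ->
  PVI_eq (cR (1/2)) (cR (1/2)) (cR (1/2)) (cR (3/4))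
    (p/q) (n/d) (a/b) ((a1*b - a*b1)/(b*b) / (b0/(q*q))).
Proof.
  intros Hn Hd Hp Hq Hb Hb0 Hv Hw Hu HG.
  unfold PVI_eq, PVI_alpha, PVI_beta, PVI_gamma, PVI_delta. simpl cpow.
  rewrite !half, tq. unfold cR.
  assert (H2 : RtoC 2 <> 0) by (intro H; injection H; lra).
  assert (H4 : RtoC 4 <> 0) by (intro H; injection H; lra).
  match goal with |- ?L = ?R => assert (E: L - R = Gf n d p q a b a1 b1 b0 /
     (RtoC 64 * (b*b) * b0 * n * (n-d) * (n*q-p*d) * (p*p) * ((p-q)*(p-q)) * (d*d*d) * q)) end.
  { unfold Gf. field. repeat split; assumption. }
  rewrite HG in E. apply Csub0. rewrite E. field.
  repeat split; assumption.
Qed.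
Lemma loc_nz (w : C) : w <> 0 -> @locally C_UniformSpace w (fun v : C => v <> RtoC 0).
Proof.
  destruct w as [a b]. intros Hw.
  assert (Hpos : (0 < (Rabs a + Rabs b) / 2)%R).
  { destruct (Req_dec a 0) as [Ha|Ha]; destruct (Req_dec b 0) as [Hb|Hb].
    - subst; exfalso; apply Hw; reflexivity.
    - pose proof (Rabs_pos a); pose proof (Rabs_pos_lt b Hb); lra.
    - pose proof (Rabs_pos b); pose proof (Rabs_pos_lt a Ha); lra.
    - pose proof (Rabs_pos_lt b Hb); pose proof (Rabs_pos_lt a Ha); lra. }
  exists (mkposreal _ Hpos). intros v Hb Hv. subst v.
  destruct Hb as [H1 H2]. simpl in H1, H2.
  unfold ball in H1, H2; simpl in H1, H2. unfold AbsRing_ball in H1, H2; simpl in H1, H2.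
  unfold abs, minus, plus, opp in H1, H2; simpl in H1, H2.
  replace (0 + - a)%R with (- a)%R in H1 by ring.
  replace (0 + - b)%R with (- b)%R in H2 by ring.
  rewrite Rabs_Ropp in H1, H2. lra.
Qed.

Lemma evalP_loc p s : evalP p s <> 0 -> @locally C_UniformSpace s (fun u => evalP p u <> 0).
Proof.
  intros H. apply locally_C.
  pose proof (ex_derive_continuous (K:=C_AbsRing) (V:=C_NormedModule) (evalP p) s
     (ex_intro _ _ (evalP_deriv p s))) as Hc.
  unfold continuous, filterlim, filter_le, filtermap in Hc.
  apply (Hc (fun v : C => v <> RtoC 0)). apply loc_nz. exact H.
Qed.

Lemma aux_eq2 (Y D fz dD : C) : plus (mult Y D) (mult fz dD) = Y * D + fz * dD.
Proof. reflexivity. Qed.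

Lemma fin1 (Y D fz dN dD Nz : C) : D <> 0 -> fz * D = Nz -> dN = Y*D + fz*dD -> Y = (dN*D - Nz*dD)/(D*D).
Proof. intros HD H1 H2. rewrite H2, <- H1. field. exact HD. Qed.
Lemma fin2 (fz D Nz : C) : D <> 0 -> fz*D = Nz -> fz = Nz/D.
Proof. intros HD H1. rewrite <- H1. field. exact HD. Qed.

Lemma quot (f Nf Df : C -> C) z Y dN dD :
  @is_derive C_AbsRing C_NormedModule f z Y ->
  @is_derive C_AbsRing C_NormedModule Nf z dN ->
  @is_derive C_AbsRing C_NormedModule Df z dD ->
  @locally C_UniformSpace z (fun u => f u * Df u = Nf u) -> Df z <> 0 ->
  Y = (dN * Df z - Nf z * dD) / (Df z * Df z) /\ f z = Nf z / Df z.
Proof.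
  intros Hf HN HD Hloc HDz.
  assert (Hfz : f z * Df z = Nf z) by exact (locally_singleton _ _ Hloc).
  pose proof (is_derive_mult (K:=C_AbsRing) f Df z Y dD (convA _ _ _ Hf) (convA _ _ _ HD) Cmult_comm) as H1.
  apply (is_derive_ext_loc (K:=C_AbsRing) (V:=AbsRing_NormedModule C_AbsRing) _ Nf) in H1; [| apply locally_C; exact Hloc].
  apply convD in H1. apply is_C_derive_unique in H1. apply is_C_derive_unique in HN.
  rewrite HN, aux_eq2 in H1.
  split.
  - exact (fin1 Y (Df z) (f z) dN dD (Nf z) HDz Hfz H1).
  - exact (fin2 (f z) (Df z) (Nf z) HDz Hfz).
Qed.

Infix "+p" := addP (at level 50, left associativity).
Infix "-p" := subP (at level 50, left associativity).
Infix "*p" := mulP (at level 40, left associativity).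
Notation "p ^p n" := (powP p n) (at level 30, right associativity).
Definition K (a : Z) : list gz := cst a 0.
Definition I : list gz := cst 0 1.
Definition pcP : list gz := Xp ^p 8 -p ((K 2) -p (K 2) *p I) *p Xp ^p 7 -p ((K 6) +p (K 2) *p I) *p Xp ^p 6 +p ((K 10) +p (K 2) *p I) *p Xp ^p 5 +p (K 4) *p I *p Xp ^p 4 +p ((K 10) -p (K 2) *p I) *p Xp ^p 3 +p ((K 6) -p (K 2) *p I) *p Xp ^p 2 -p ((K 2) +p (K 2) *p I) *p Xp -p (K 1).
Definition pdP : list gz := Xp ^p 6 -p ((K 3) +p (K 3) *p I) *p Xp ^p 5 +p (K 3) *p I *p Xp ^p 4 +p ((K 4) -p (K 4) *p I) *p Xp ^p 3 +p (K 3) *p Xp ^p 2 +p ((K 3) +p (K 3) *p I) *p Xp +p I.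
Definition pN : list gz := oppP (((K 1) +p I) *p (Xp ^p 2 -p (K 1)) *p (Xp ^p 2 +p (K 2) *p I *p Xp +p (K 1)) *p (Xp ^p 2 -p (K 2) *p I *p Xp +p (K 1)) ^p 2 *p pcP).
Definition pD : list gz := (K 4) *p Xp *p (Xp ^p 2 +p I) *p (Xp ^p 2 -p I) ^p 2 *p (Xp ^p 2 +p ((K 1) +p I) *p Xp -p I) *p pdP.
Definition pP : list gz := (Xp ^p 2 -p (K 1)) ^p 2 *p (Xp ^p 4 +p (K 6) *p Xp ^p 2 +p (K 1)) ^p 3.
Definition pQ : list gz := (K 32) *p Xp ^p 2 *p (Xp ^p 4 +p (K 1)) ^p 3.
Definition Gp (n d p q a b a1 b1 b0 : list gz) : list gz :=
  (K 64)  *p  (a1 *p b  -p  a *p b1)  *p  (q *p q *p q)  *p  n  *p  (n -p d)  *p  (n *p q -p p *p d)  *p  (p *p p)  *p  ((p -p q) *p (p -p q))  *p  (d *p d *p d)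
   -p  (K 32)  *p  (a *p a)  *p  ((n -p d) *p (n *p q -p p *p d)  +p  n *p (n *p q -p p *p d)  +p  q *p n *p (n -p d))  *p  b0  *p  (p *p p)  *p  ((p -p q) *p (p -p q))  *p  (d *p d *p d *p d)  *p  q
   +p  (K 64)  *p  a  *p  ((p -p q) *p (n *p q -p p *p d)  +p  p *p (n *p q -p p *p d)  +p  d *p p *p (p -p q))  *p  b  *p  b0  *p  n  *p  (n -p d)  *p  p  *p  (p -p q)  *p  (d *p d *p d)  *p  (q *p q)
   -p  (b *p b)  *p  b0  *p  (q *p q *p q)  *p  ((K 2)  *p  q  *p  (n *p n)  *p  ((n -p d) *p (n -p d))  *p  ((n *p q -p p *p d) *p (n *p q -p p *p d))
         -p  (K 8)  *p  p  *p  (d *p d)  *p  ((n -p d) *p (n -p d))  *p  ((n *p q -p p *p d) *p (n *p q -p p *p d))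
         +p  (K 8)  *p  (p -p q)  *p  (d *p d)  *p  (n *p n)  *p  ((n *p q -p p *p d) *p (n *p q -p p *p d))
         +p  (K 24)  *p  q  *p  p  *p  (p -p q)  *p  (d *p d)  *p  (n *p n)  *p  ((n -p d) *p (n -p d))).
Definition pb0 := derivP pP *p pQ -p pP *p derivP pQ.
Definition pA := (derivP pN *p pD -p pN *p derivP pD) *p (pQ *p pQ).
Definition pB := pb0 *p (pD *p pD).
Definition pG := Gp pN pD pP pQ pA pB (derivP pA) (derivP pB) pb0.

Lemma toC_i : toC (0%Z,1%Z) = Ci.
Proof. reflexivity. Qed.

Hint Rewrite evalP_add evalP_mul evalP_sub evalP_opp evalP_pow evalP_X evalP_cst : evp.

Lemma ynum_eq z : ynum z = evalP pN z.
Proof. unfold ynum, cP, pN, pcP, K, I. autorewrite with evp. rewrite ?toC_i, ?toC_real. unfold cR. ring. Qed.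
Lemma yden_eq z : yden z = evalP pD z.
Proof. unfold yden, dP, pD, pdP, K, I. autorewrite with evp. rewrite ?toC_i, ?toC_real. unfold cR. ring. Qed.
Lemma tnum_eq z : tnum z = evalP pP z.
Proof. unfold tnum, pP, K, I. autorewrite with evp. rewrite ?toC_i, ?toC_real. unfold cR. ring. Qed.
Lemma tden_eq z : tden z = evalP pQ z.
Proof. unfold tden, pQ, K, I. autorewrite with evp. rewrite ?toC_i, ?toC_real. unfold cR. ring. Qed.

Lemma Gp_eval n d p q a b a1 b1 b0 z :
  evalP (Gp n d p q a b a1 b1 b0) z =
  Gf (evalP n z) (evalP d z) (evalP p z) (evalP q z) (evalP a z) (evalP b z)
     (evalP a1 z) (evalP b1 z) (evalP b0 z).
Proof. unfold Gp, Gf, K. autorewrite with evp. rewrite ?toC_real. ring. Qed.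

Lemma pG_zero : iszeroP (Gp pN pD pP pQ pA pB (derivP pA) (derivP pB) pb0) = true.
Proof. vm_compute. reflexivity. Qed.

Lemma yfun_eq u : yfun u = evalP pN u / evalP pD u.
Proof. unfold yfun. rewrite ynum_eq, yden_eq. reflexivity. Qed.
Lemma tfun_eq u : tfun u = evalP pP u / evalP pQ u.
Proof. unfold tfun. rewrite tnum_eq, tden_eq. reflexivity. Qed.
Lemma pb0_eval z : evalP pb0 z = evalP (derivP pP) z * evalP pQ z - evalP pP z * evalP (derivP pQ) z.
Proof. unfold pb0. autorewrite with evp. reflexivity. Qed.
Lemma pB_eval z : evalP pB z = evalP pb0 z * (evalP pD z * evalP pD z).
Proof. unfold pB. autorewrite with evp. reflexivity. Qed.
Lemma pA_eval z : evalP pA z = (evalP (derivP pN) z * evalP pD z - evalP pN z * evalP (derivP pD) z) * (evalP pQ z * evalP pQ z).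
Proof. unfold pA. autorewrite with evp. reflexivity. Qed.

Theorem mainTheorem12 :
  forall (s : C) (Y1 T1 : C -> C) (W : C),
    yden s <> cR 0 -> tden s <> cR 0 ->
    locally s (fun u => @is_derive C_AbsRing C_NormedModule yfun u (Y1 u)) ->
    locally s (fun u => @is_derive C_AbsRing C_NormedModule tfun u (T1 u)) ->
    @is_derive C_AbsRing C_NormedModule (fun u => Y1 u / T1 u) s W ->
    T1 s <> cR 0 ->
    yfun s <> cR 0 -> yfun s <> cR 1 -> yfun s <> tfun s ->
    tfun s <> cR 0 -> tfun s <> cR 1 ->
    PVI_eq (cR (1/2)) (cR (1/2)) (cR (1/2)) (cR (3/4))
           (tfun s) (yfun s) (Y1 s / T1 s) (W / T1 s).
Proof.
  intros s Y1 T1 W HyD HtD HY HT HW HT1 Hy0 Hy1 Hyt Ht0 Ht1.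
  rewrite yden_eq in HyD. rewrite tden_eq in HtD.
  pose proof (evalP_loc pD s HyD) as LD.
  pose proof (evalP_loc pQ s HtD) as LQ.
  assert (LY : @locally C_UniformSpace s (fun u => Y1 u =
     (evalP (derivP pN) u * evalP pD u - evalP pN u * evalP (derivP pD) u) / (evalP pD u * evalP pD u))).
  { generalize (filter_and _ _ LD HY). apply filter_imp. intros u [HDu HYu].
    refine (proj1 (quot yfun (evalP pN) (evalP pD) u (Y1 u) _ _ HYu (evalP_deriv _ _) (evalP_deriv _ _) _ HDu)).
    generalize (evalP_loc pD u HDu). apply filter_imp. intros v Hv. rewrite yfun_eq. field. exact Hv. }
  assert (LT : @locally C_UniformSpace s (fun u => T1 u =
     (evalP (derivP pP) u * evalP pQ u - evalP pP u * evalP (derivP pQ) u) / (evalP pQ u * evalP pQ u))).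
  { generalize (filter_and _ _ LQ HT). apply filter_imp. intros u [HQu HTu].
    refine (proj1 (quot tfun (evalP pP) (evalP pQ) u (T1 u) _ _ HTu (evalP_deriv _ _) (evalP_deriv _ _) _ HQu)).
    generalize (evalP_loc pQ u HQu). apply filter_imp. intros v Hv. rewrite tfun_eq. field. exact Hv. }
  assert (HT1e : T1 s = evalP pb0 s / (evalP pQ s * evalP pQ s)).
  { rewrite pb0_eval. exact (locally_singleton _ _ LT). }
  assert (Hb0 : evalP pb0 s <> 0).
  { intro H. apply HT1. rewrite HT1e, H. unfold cR. field. exact HtD. }
  assert (HB : evalP pB s <> 0).
  { rewrite pB_eval. apply Cmult_neq_0; [exact Hb0 | apply Cmult_neq_0; exact HyD]. }
  pose proof (evalP_loc pB s HB) as LB.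
  assert (Hloc : @locally C_UniformSpace s (fun u => (Y1 u / T1 u) * evalP pB u = evalP pA u)).
  { generalize (filter_and _ _ LB (filter_and _ _ LD (filter_and _ _ LQ (filter_and _ _ LY LT)))).
    apply filter_imp. intros u [HBu [HDu [HQu [HYu HTu]]]].
    rewrite pB_eval in HBu.
    assert (Hb0u : evalP pb0 u <> 0) by (intro H; apply HBu; rewrite H; ring).
    rewrite pb0_eval in Hb0u.
    rewrite HYu, HTu, pA_eval, pB_eval, pb0_eval. field. repeat split; assumption. }
  destruct (quot (fun u => Y1 u / T1 u) (evalP pA) (evalP pB) s W _ _ HW
               (evalP_deriv _ _) (evalP_deriv _ _) Hloc HB) as [HWe HAB].
  cbv beta in HAB.
  rewrite HAB, HWe, HT1e, yfun_eq, tfun_eq.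
  apply key.
  - intro H. apply Hy0. rewrite yfun_eq, H. unfold cR. field. exact HyD.
  - exact HyD.
  - intro H. apply Ht0. rewrite tfun_eq, H. unfold cR. field. exact HtD.
  - exact HtD.
  - exact HB.
  - exact Hb0.
  - intro H. apply Hy1. rewrite yfun_eq.
    replace (evalP pN s) with (evalP pD s) by (apply Csub0 in H; symmetry; exact H).
    unfold cR. field. exact HyD.
  - intro H. apply Ht1. rewrite tfun_eq.
    replace (evalP pP s) with (evalP pQ s) by (apply Csub0 in H; symmetry; exact H).
    unfold cR. field. exact HtD.
  - intro H. apply Hyt. rewrite yfun_eq, tfun_eq.
    apply Csub0.
    replace (evalP pN s / evalP pD s - evalP pP s / evalP pQ s) with
      ((evalP pN s * evalP pQ s - evalP pP s * evalP pD s) / (evalP pD s * evalP pQ s))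
      by (field; split; assumption).
    rewrite H. field. split; assumption.
  - rewrite <- Gp_eval. apply evalP_zero. exact pG_zero.
Qed.
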